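(* Let $L\subseteq\mathbb{C}^n$ be a linear subspace and $m\ge1$, and let $L(m)\subseteq(\mathbb{C}^n)^m=\mathbb{C}^{[m]\times[n]}$ be its $m$-thickening. Then the linear map \[ \gamma:(R_{L(m)})_1\to(R_L)_m,\qquad \gamma(z_S)=\prod_{i=1}^m z_{S_{i,*}}\quad(S\subseteq[m]\times[n]), \] is well defined and surjective.
   Context: The $m$-thickening $L(m)$ is the image of $L$ under the diagonal embedding $\mathbb{C}^n\hookrightarrow(\mathbb{C}^n)^m$; its coordinates are indexed by $[m]\times[n]$. For $S\subseteq[m]\times[n]$, $S_{i,*}=\{j:(i,j)\in S\}$. For a linear subspace $L'\subseteq\mathbb{C}^N$ with matroid $M'$ (bases: $\dim L'$-subsets $B$ with $L'\to\mathbb{C}^B$ an isomorphism), fix a matrix with row space $L'$ and columns $A_i$; for each circuit $C$ fix the dependence $\sum_{i\in C}\alpha_{C,i}A_i=0$; for $A'\subseteq[N]\setminus C$ let $f_C^{A'}(z)=\sum_{i\in C}\alpha_{C,i}z_{A'\cup\{i\}}$. Then $I_{L'}^{\mathrm{SE}}$ is the ideal of $\mathbb{C}[z_S:S\subseteq[N]]$ generated by all $z_Sz_T-z_{S\cup T}z_{S\cap T}$ and all $f_C^{A'}$, and $R_{L'}=\mathbb{C}[z_S:S\subseteq[N]]/I_{L'}^{\mathrm{SE}}$, graded by polynomial degree in the $z$'s; $(R_{L'})_k$ denotes its degree-$k$ part. *)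

(* Defs.v *)
From HB Require Import structures.
From mathcomp Require Import all_boot all_order all_algebra.
From mathcomp Require Import reals.
From mathcomp.real_closed Require Import complex.
From mathcomp.multinomials Require Import mpoly.

Set Implicit Arguments.
Unset Strict Implicit.
Unset Printing Implicit Defensive.

Import Order.TTheory GRing.Theory Num.Theory.
Local Open Scope ring_scope.

Section SE.
Variables (K : fieldType) (E : finType).

(* The polynomial ring K[z_S : S ⊆ E]; variables are indexed by {set E}
   through enum_rank. *)
Definition zring := {mpoly K[#|{set E}|]}.

Definition zvar (S : {set E}) : zring := 'X_(enum_rank S).

Definition in_ideal (G : zring -> Prop) (p : zring) : Prop :=
  exists s : seq (zring * zring),
    (forall x, x \in s -> G x.2) /\ p = \sum_(x <- s) x.1 * x.2.

Variable k : nat.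
(* A linear subspace L' of K^E is given as the row space of a matrix with
   rows  rows r : E -> K  (r < k);  its columns are A_e = (rows r e)_r. *)
Variable rows : 'I_k -> E -> K.

Definition col_dependence (alpha : E -> K) : Prop :=
  forall r : 'I_k, \sum_(e : E) alpha e * rows r e = 0.

Definition mdependent (S : {set E}) : Prop :=
  exists alpha : E -> K,
    (exists e, alpha e != 0) /\ (forall e, e \notin S -> alpha e = 0) /\
    col_dependence alpha.

Definition mcircuit (C : {set E}) : Prop :=
  mdependent C /\ forall C' : {set E}, C' \proper C -> ~ mdependent C'.

Definition fCA (C A' : {set E}) (alpha : E -> K) : zring :=
  \sum_(i in C) alpha i *: zvar (A' :|: [set i]).

Definition SE_gen (p : zring) : Prop :=
  (exists S T : {set E},
      p = zvar S * zvar T - zvar (S :|: T) * zvar (S :&: T))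
  \/ (exists (C A' : {set E}) (alpha : E -> K),
      [/\ mcircuit C, [disjoint A' & C],
          (forall e, e \notin C -> alpha e = 0), col_dependence alpha
        & p = fCA C A' alpha]).

Definition I_SE (p : zring) : Prop := in_ideal SE_gen p.

End SE.

(* The m-thickening: rows of L(m) are the images of the rows of L under the
   diagonal embedding K^n -> (K^n)^m = K^([m] x [n]). *)
Definition diag_emb (K : Type) (m n : nat) (x : 'I_n -> K) : 'I_m * 'I_n -> K :=
  fun ij => x ij.2.

Definition thicken (K : Type) (m n k : nat) (rows : 'I_k -> 'I_n -> K)
  : 'I_k -> 'I_m * 'I_n -> K :=
  fun r => @diag_emb K m n (rows r).

Definition slice (m n : nat) (S : {set 'I_m * 'I_n}) (i : 'I_m) : {set 'I_n} :=
  [set j | (i, j) \in S].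

(* gamma on variables: z_S |-> prod_i z_{S_{i,*}}, extended linearly
   (applied to homogeneous degree-1 polynomials, i.e. linear forms). *)
Definition gamma (K : fieldType) (m n : nat)
  (p : zring K ('I_m * 'I_n)%type) : zring K 'I_n :=
  mmap (@mpolyC _ K)
    (fun v => \prod_(i < m) zvar K (slice (enum_val v) i)) p.

(* Main.v *)
Require Import Defs.
From HB Require Import structures.
From mathcomp Require Import all_boot all_order all_algebra.
From mathcomp Require Import reals.
From mathcomp.real_closed Require Import complex.
From mathcomp.multinomials Require Import mpoly.
From mathcomp Require Import zify.
From Stdlib Require Import Classical.
Set Implicit Arguments.
Unset Strict Implicit.
Unset Printing Implicit Defensive.
Import Order.TTheory GRing.Theory Num.Theory.
Local Open Scope ring_scope.


Section Ideal.
Variables (K : fieldType) (E : finType) (k : nat) (rows : 'I_k -> E -> K).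
Local Notation I := (I_SE rows).
Local Notation zr := (zring K E).
Local Notation zv := (zvar K).

Lemma I0 : I 0.
Proof. by exists [::]; split => //; rewrite big_nil. Qed.

Lemma ID p q : I p -> I q -> I (p + q).
Proof.
case=> s [Hs ->] [t [Ht ->]]; exists (s ++ t); split; last by rewrite big_cat.
by move=> x; rewrite mem_cat => /orP[/Hs|/Ht].
Qed.

Lemma IM r p : I p -> I (r * p).
Proof.
case=> s [Hs ->]; exists [seq (r * x.1, x.2) | x <- s]; split.
  by move=> x /mapP [y /Hs Hy ->].
by rewrite big_map mulr_sumr; apply: eq_bigr => x _; rewrite mulrA.
Qed.

Lemma Igen g : SE_gen rows g -> I g.
Proof.
by move=> Hg; exists [:: (1, g)]; split; [move=> x; rewrite inE => /eqP -> | rewrite big_seq1 mul1r].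
Qed.

Lemma IN p : I p -> I (- p).
Proof. by move=> Hp; rewrite -mulN1r; apply: IM. Qed.

Lemma IB p q : I p -> I q -> I (p - q).
Proof. by move=> Hp Hq; apply: ID => //; apply: IN. Qed.

Lemma IZ c p : I p -> I (c *: p).
Proof. by move=> Hp; rewrite -mul_mpolyC; apply: IM. Qed.

Lemma Isum (T : Type) (r : seq T) (P : pred T) (F : T -> zr) :
  (forall x, P x -> I (F x)) -> I (\sum_(x <- r | P x) F x).
Proof.
move=> H; elim: r => [|x r IH]; first by rewrite big_nil; apply: I0.
by rewrite big_cons; case: ifP => // Px; apply: ID => //; apply: H.
Qed.

Lemma Itrans a b c : I (a - b) -> I (b - c) -> I (a - c).
Proof. by move=> H1 H2; have := ID H1 H2; rewrite addrA subrK. Qed.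

Lemma IMc r a b : I (a - b) -> I (r * a - r * b).
Proof. by move=> H; rewrite -mulrBr; apply: IM. Qed.
End Ideal.



Section Chain.
Variables (K : fieldType) (E : finType) (k : nat) (rows : 'I_k -> E -> K).
Local Notation I := (I_SE rows).
Local Notation zr := (zring K E).
Local Notation zv := (zvar K).

Definition Ch (c : E -> nat) (m : nat) : zr :=
  \prod_(j < m) zv [set e | (j < c e)%N].

Lemma Ch_eq c c' m : c =1 c' -> Ch c m = Ch c' m.
Proof.
by move=> H; apply: eq_bigr => j _; congr zvar; apply/setP => e; rewrite !inE H.
Qed.

Lemma Ch_S c m : Ch c m.+1 = zv [set e | (0 < c e)%N] * Ch (fun e => (c e).-1) m.
Proof.
rewrite /Ch big_ord_recl; congr (_ * _); apply: eq_bigr => j _.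
by congr zvar; apply/setP => e; rewrite !inE /= -(ltn_predRL).
Qed.

Lemma chainA m : forall c (X : {set E}), (forall e, c e <= m)%N ->
  I (zv X * Ch c m - Ch (fun e => c e + (e \in X))%N m.+1).
Proof.
elim: m => [|m IH] c X Hc.
  rewrite Ch_S /Ch !big_ord0 mulr1.
  have -> : [set e | (0 < c e + (e \in X))%N] = X.
    by apply/setP => e; rewrite inE; have := Hc e; rewrite leqn0 => /eqP ->; case: (e \in X).
  by rewrite mulr1 subrr; apply: I0.
set U := [set e | (0 < c e)%N].
rewrite Ch_S mulrA.
have H1 : I (zv X * zv U * Ch (fun e => (c e).-1) m -
             zv (X :|: U) * zv (X :&: U) * Ch (fun e => (c e).-1) m).
  rewrite -mulrBl mulrC; apply: IM; apply: Igen; left; by exists X, U.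
apply: Itrans H1 _.
rewrite -mulrA.
have Hc' : forall e, ((c e).-1 <= m)%N.
  by move=> e; have := Hc e; case: (c e).
have H2 := IH (fun e => (c e).-1) (X :&: U) Hc'.
rewrite Ch_S.
have -> : [set e | (0 < c e + (e \in X))%N] = X :|: U.
  by apply/setP => e; rewrite !inE; case: (e \in X); rewrite ?addn1 ?addn0 ?orbT ?orbF.
rewrite (@Ch_eq (fun e => (c e + (e \in X)).-1) (fun e => (c e).-1 + (e \in X :&: U))%N).
  by apply: IMc.
move=> e; rewrite !inE; case: (e \in X) => /=; last by rewrite !addn0.
by case: (c e) => [|x] //=; rewrite addn1.
Qed.

Definition zp (s : seq {set E}) : zr := \prod_(X <- s) zv X.
Definition mult (s : seq {set E}) (e : E) : nat := count (fun X : {set E} => e \in X) s.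

Lemma mult_le s e : (mult s e <= size s)%N.
Proof. by rewrite /mult count_size. Qed.

Lemma chainB s : I (zp s - Ch (mult s) (size s)).
Proof.
elim: s => [|X s IH]; first by rewrite /zp /Ch big_nil big_ord0 subrr; apply: I0.
rewrite /zp big_cons /=.
apply: Itrans (IMc (zv X) IH) _.
rewrite (@Ch_eq (mult (X :: s)) (fun e => mult s e + (e \in X))%N).
  by apply: chainA => e; apply: mult_le.
by move=> e; rewrite /mult /= addnC.
Qed.

Lemma zp_cong s t : size s = size t -> mult s =1 mult t -> I (zp s - zp t).
Proof.
move=> Hs Hm; apply: Itrans (chainB s) _.
rewrite Hs (Ch_eq _ Hm) -opprB; apply: IN; apply: chainB.
Qed.
End Chain.



Section Dep.
Variables (K : fieldType) (E : finType) (k : nat) (rows : 'I_k -> E -> K).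
Local Notation I := (I_SE rows).
Local Notation zr := (zring K E).
Local Notation zv := (zvar K).

Lemma ex_circuit S : mdependent rows S -> exists C : {set E}, C \subset S /\ mcircuit rows C.
Proof.
move: {2}#|S| (leqnn #|S|) => N; elim: N S => [|N IH] S HS Hd.
  case: Hd => a [[e He] [Hoff _]].
  move: HS; rewrite leqn0 cards_eq0 => /eqP HS.
  have : e \notin S by rewrite HS inE.
  by move/Hoff => H0; move: He; rewrite H0 eqxx.
case: (classic (exists C' : {set E}, C' \proper S /\ mdependent rows C')) => [[C' [HC' Hd']]|Hno].
  have HC'N : (#|C'| <= N)%N by rewrite -ltnS; apply: leq_trans (proper_card HC') HS.
  have [C [HC1 HC2]] := IH C' HC'N Hd'.
  by exists C; split => //; apply: subset_trans HC1 (proper_sub HC').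
exists S; split => //; split => // C' HC' Hd'; apply: Hno; by exists C'.
Qed.

Definition Fb (A : {set E}) (b : E -> K) : zr := \sum_e b e *: zv (A :|: [set e]).

Lemma Fb_I (A : {set E}) : forall b : E -> K, col_dependence rows b ->
  (forall e, b e != 0 -> e \notin A) -> I (Fb A b).
Proof.
move=> b0; move: {2}#|[set e | b0 e != 0]| (leqnn #|[set e | b0 e != 0]|) => N.
elim: N b0 => [|N IH] b HN Hcol HA.
  move: HN; rewrite leqn0 cards_eq0 => /eqP HS.
  rewrite /Fb big1; first exact: I0.
  move=> e _; have : e \notin [set e | b e != 0] by rewrite HS inE.
  by rewrite inE negbK => /eqP ->; rewrite scale0r.
case: (pickP (fun e => b e != 0)) => [e1 He1|Hz]; last first.
  rewrite /Fb big1; first exact: I0.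
  by move=> e _; move/negbT: (Hz e); rewrite negbK => /eqP ->; rewrite scale0r.
set S := [set e | b e != 0].
have HdS : mdependent rows S.
  exists b; split; first by exists e1.
  by split => // e; rewrite inE negbK => /eqP.
have [C [HCS [HCd HCmin]]] := ex_circuit HdS.
have HCd' := HCd; case: HCd' => a [[e0 He0] [Hoff Hacol]].
have He0C : e0 \in C.
  by apply/negPn/negP => /Hoff H; move: He0; rewrite H eqxx.
have Hb0 : b e0 != 0 by have := subsetP HCS _ He0C; rewrite inE.
set t := b e0 / a e0.
set b' := fun e => b e - t * a e.
have Hsupp : forall e, b' e != 0 -> b e != 0.
  move=> e; rewrite /b' => H; apply/negP => /eqP Hbe; move: H.
  case: (boolP (e \in C)) => [HeC|HeC].
    by move: (subsetP HCS _ HeC); rewrite inE Hbe eqxx.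
  by rewrite Hoff // mulr0 Hbe subrr eqxx.
have -> : Fb A b = Fb A b' + t *: fCA C A a.
  have -> : t *: fCA C A a = \sum_i t * a i *: zv (A :|: [set i]).
    rewrite /fCA scaler_sumr (bigID (fun i => i \in C) (fun i => true)) /=.
    rewrite [X in _ = _ + X]big1 ?addr0; last first.
      by move=> i Hi; rewrite Hoff // mulr0 scale0r.
    by apply: eq_bigr => i _; rewrite scalerA.
  by rewrite /Fb -big_split /=; apply: eq_bigr => i _; rewrite /b' -scalerDl subrK.
apply: ID; last first.
  apply: IZ; apply: Igen; right; exists C, A, a; split => //.
  rewrite disjoint_subset; apply/subsetP => x xA; rewrite inE /=.
  apply/negP => xC; move: (subsetP HCS _ xC); rewrite inE => /HA.
  by rewrite xA.
apply: IH.
- rewrite -ltnS; apply: leq_trans HN; apply: proper_card.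
  apply/properP; split.
    by apply/subsetP => e; rewrite !inE; apply: Hsupp.
  exists e0; first by rewrite inE.
  by rewrite inE /b' /t divfK ?subrr ?eqxx.
- move=> r; rewrite /b'.
  under eq_bigr do rewrite mulrBl -mulrA.
  by rewrite sumrB -mulr_sumr Hcol Hacol mulr0 subrr.
- by move=> e /Hsupp /HA.
Qed.
End Dep.



Section Gam.
Variables (K : fieldType) (m n : nat).
Local Notation zE := (zring K ('I_m * 'I_n)%type).
Local Notation zN := (zring K 'I_n).

Lemma gammaD (p q : zE) : gamma (p + q) = gamma p + gamma q.
Proof. exact: mmapD. Qed.
Lemma gammaZ c (p : zE) : gamma (c *: p) = c%:MP * gamma p.
Proof. exact: mmapZ. Qed.
Lemma gammaM (p q : zE) : gamma (p * q) = gamma p * gamma q.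
Proof. by rewrite /gamma rmorphM. Qed.
Lemma gamma_sum (T : Type) (r : seq T) (P : pred T) (F : T -> zE) :
  gamma (\sum_(x <- r | P x) F x) = \sum_(x <- r | P x) gamma (F x).
Proof. by rewrite /gamma raddf_sum. Qed.
Lemma gamma_zvar (S : {set 'I_m * 'I_n}) : gamma (zvar K S) = \prod_(i < m) zvar K (slice S i).
Proof. by rewrite /gamma /zvar mmapX mmap1U enum_rankK. Qed.
End Gam.

Lemma pihomogM (K : fieldType) (N : nat) (d e : nat) (h g : {mpoly K[N]}) :
  g \is e.-homog -> pihomog mdeg d (h * g) =
    if (e <= d)%N then pihomog mdeg (d - e) h * g else 0.
Proof.
move=> Hg.
rewrite {1}(@pihomog_partitionE _ _ mdeg (msize h + d.+1) h) ?leq_addr //.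
rewrite mulr_suml raddf_sum /=.
have Ht0 : forall i : nat, pihomog mdeg d (pihomog mdeg i h * g) =
    if (i + e == d)%N then pihomog mdeg i h * g else 0.
  move=> i; have Hh : pihomog mdeg i h * g \is (i + e).-homog.
    by apply: dhomogM => //; apply: pihomogP.
  case: eqP => [Hid|/eqP Hne]; first by rewrite pihomog_dE // -Hid.
  by apply: pihomog_ne0 Hh.
have Ht : forall i : 'I_(msize h + d.+1), pihomog mdeg d (pihomog mdeg i h * g) =
    if (i + e == d)%N then pihomog mdeg i h * g else 0 by move=> i; apply: Ht0.
rewrite (eq_bigr _ (fun i _ => Ht i)) -big_mkcond /=.
case: leqP => Hed.
  have Hlt : (d - e < msize h + d.+1)%N.
    by rewrite ltn_addl // ltnS leq_subr.
  rewrite (big_pred1 (Ordinal Hlt)) // => i /=.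
  apply/eqP/eqP => [Hi|->]; last by rewrite /= subnK.
  by apply: val_inj; apply/eqP; rewrite /= -(eqn_add2r e) subnK // Hi.
rewrite big_pred0 // => i; apply/negbTE/eqP => Hi.
by move: Hed; rewrite -Hi ltnNge leq_addl.
Qed.



Lemma count_lt_enum (p a : nat) :
  count (fun j : 'I_p => (j < a)%N) (enum 'I_p) = minn a p.
Proof.
rewrite -(count_map val (fun j => (j < a)%N)) val_enum_ord.
elim: p => [|p IH]; first by rewrite minn0.
rewrite -addn1 iotaD count_cat IH /= addn0 add0n.
case: (leqP a p) => H.
  by rewrite addn0; lia.
by rewrite addn1; lia.
Qed.

Section Lin.
Variables (K : fieldType) (m n k : nat) (rows : 'I_k -> 'I_n -> K).
Hypothesis hm : (0 < m)%N.
Local Notation zE := (zring K ('I_m * 'I_n)%type).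
Local Notation zN := (zring K 'I_n).

Lemma prod_ord_enum (T : Type) (F : 'I_m -> zN) :
  \prod_(i < m) F i = \prod_(X <- [seq F i | i <- enum 'I_m]) X.
Proof. by rewrite big_map big_enum. Qed.

Lemma gamma_lin (C' A' : {set 'I_m * 'I_n}) (al : 'I_m * 'I_n -> K) :
  [disjoint A' & C'] -> (forall x, x \notin C' -> al x = 0) ->
  col_dependence (@thicken K m n k rows) al ->
  I_SE rows (gamma (fCA C' A' al)).
Proof.
move=> Hdis Hoff Hcol.
set c := fun e => count (fun i => (i, e) \in A') (enum 'I_m).
have Hcm : forall e, (c e <= m)%N.
  by move=> e; rewrite /c; apply: leq_trans (count_size _ _) _; rewrite size_enum_ord.
set A2 := [set e | c e == m].
set d := fun e => (c e - (c e == m))%N.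
set Q := Ch K d m.-1.
set t := fun j => (A2 :|: [set j]) :: [seq [set e | (val j' < d e)%N] | j' <- enum 'I_m.-1].
set s := fun x => [seq slice (A' :|: [set x]) i | i <- enum 'I_m].
have Hgx : forall x, gamma (zvar K (A' :|: [set x])) = zp K (s x).
  by move=> x; rewrite gamma_zvar /zp /s big_map big_enum.
have Ht : forall j, zp K (t j) = zvar K (A2 :|: [set j]) * Q.
  by move=> j; rewrite /zp /t big_cons big_map big_enum.
have HxA : forall x, x \in C' -> x \notin A'.
  by move=> x xC; apply/negP => xA; move: (disjointFr Hdis xA); rewrite xC.
have Hmult : forall x, x \in C' -> mult (s x) =1 mult (t x.2).
  move=> [i0 j] HC e; have HnA := HxA _ HC.
  have Hs : mult (s (i0, j)) e = (c e + (e == j))%N.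
    rewrite /mult /s count_map.
    transitivity (count (predU (fun i => (i, e) \in A') (fun i => (i == i0) && (e == j))) (enum 'I_m)).
      by apply: eq_count => i; rewrite /= !inE xpair_eqE.
    have HI : count (predI (fun i => (i, e) \in A') (fun i => (i == i0) && (e == j))) (enum 'I_m) = 0%N.
      rewrite (eq_count (a2 := pred0)) ?count_pred0 // => i /=.
      by case: (eqVneq i i0) => [->|] //=; case: (eqVneq e j) => [->|] //=; rewrite ?andbF ?andbT ?(negbTE HnA).
    have := count_predUI (fun i => (i, e) \in A') (fun i => (i == i0) && (e == j)) (enum 'I_m).
    rewrite HI addn0 => ->; congr (_ + _)%N.
    case: (eqVneq e j) => _; last by rewrite (eq_count (a2 := pred0)) ?count_pred0 // => i; rewrite andbF.
    rewrite (eq_count (a2 := pred1 i0)); last by move=> i; rewrite andbT.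
    by rewrite count_uniq_mem ?enum_uniq // mem_enum.
  have Hcj : c j != m.
    apply/eqP => Hcj; have Hall : all (fun i => (i, j) \in A') (enum 'I_m).
      by rewrite all_count size_enum_ord -/(c j) Hcj.
    by move: HnA; rewrite (allP Hall) // mem_enum.
  have Htt : mult (t j) e = (((c e == m) || (e == j)) + d e)%N.
    rewrite /mult /t /= count_map !inE.
    rewrite (eq_count (a2 := fun j' : 'I_m.-1 => (j' < d e)%N)); last by move=> j'; rewrite /= inE.
    rewrite count_lt_enum; congr (_ + _)%N; apply/minn_idPl.
    by rewrite /d; have := Hcm e; case: eqP => [->|]; rewrite ?subn1 //; lia.
  rewrite Hs Htt /d; have := Hcm e; case: (eqVneq e j) => [->|Hej].
    by rewrite (negbTE Hcj) /= subn0 addn1 add1n.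
  rewrite orbF addn0; case: eqP => [->|] /= _; last by rewrite subn0.
  by rewrite add1n subn1 prednK.
rewrite /fCA gamma_sum.
set T := \sum_(i in C') al i *: (zvar K (A2 :|: [set i.2]) * Q).
have -> : \sum_(i in C') gamma (al i *: zvar K (A' :|: [set i])) =
   (\sum_(i in C') gamma (al i *: zvar K (A' :|: [set i])) - T) + T.
  by rewrite subrK.
apply: ID.
  rewrite /T -sumrB; apply: Isum => x xC.
  rewrite gammaZ Hgx -Ht -mul_mpolyC -mulrBr; apply: IM.
  apply: zp_cong; last exact: Hmult.
  by rewrite /s /t /= !size_map -!enumT !size_enum_ord prednK.
set be := fun j : 'I_n => \sum_(i < m) al (i, j).
have HT : T = Fb A2 be * Q.
  rewrite /T /Fb mulr_suml.
  rewrite (eq_bigr (fun j : 'I_n => \sum_(i < m) al (i, j) *: zvar K (A2 :|: [set j]) * Q)); last first.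
    by move=> j _; rewrite /be scaler_suml mulr_suml.
  rewrite exchange_big pair_big /=.
  rewrite [RHS](bigID (fun x => x \in C')) /= [X in _ = _ + X]big1 ?addr0; last first.
    by move=> [i j] /negbTE Hx; rewrite Hoff ?Hx // scale0r mul0r.
  apply: eq_big => [[i j]|[i j] _] //=; last by rewrite scalerAl.
have Hbe : forall j, be j != 0 -> j \notin A2.
  move=> j; apply: contraNN; rewrite inE => /eqP Hcj.
  have Hall : all (fun i => (i, j) \in A') (enum 'I_m).
    by rewrite all_count size_enum_ord -/(c j) Hcj.
  rewrite /be big1 // => i _; apply: Hoff; apply/negP => HiC.
  by move: (HxA _ HiC); rewrite (allP Hall) // mem_enum.
have Hbcol : col_dependence rows be.
  move=> r; rewrite -[RHS](Hcol r) /be.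
  rewrite (eq_bigr (fun j => \sum_(i < m) al (i, j) * thicken rows r (i, j))); last first.
    by move=> j _; rewrite mulr_suml.
  by rewrite exchange_big pair_big /=; apply: eq_bigr => [[i j]] _.
rewrite HT mulrC; apply: IM; exact: Fb_I.
Qed.
End Lin.



Lemma zvar_homog (K : fieldType) (E : finType) (S : {set E}) : zvar K S \is 1.-homog.
Proof. by rewrite /zvar dhomogX /= mdeg1. Qed.

Lemma fCA_homog (K : fieldType) (E : finType) C A (al : E -> K) : fCA C A al \is 1.-homog.
Proof. by apply: rpred_sum => i _; apply: rpredZ; apply: zvar_homog. Qed.

Lemma bin_homog (K : fieldType) (E : finType) (S T : {set E}) :
  zvar K S * zvar K T - zvar K (S :|: T) * zvar K (S :&: T) \is 2.-homog.
Proof. by apply: rpredB; apply: (@dhomogM _ _ _ 1 _ 1); apply: zvar_homog. Qed.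

Section Part1.
Variables (K : fieldType) (m n k : nat) (rows : 'I_k -> 'I_n -> K).
Hypothesis hm : (0 < m)%N.

Lemma part1 (p : zring K ('I_m * 'I_n)%type) :
  p \is 1.-homog -> I_SE (@thicken K m n k rows) p -> I_SE rows (gamma p).
Proof.
move=> Hp [s [Hs Hps]].
rewrite -(pihomog_dE Hp) Hps raddf_sum gamma_sum /= big_seq.
apply: Isum => x /Hs [[S [T ->]]|[C [A [al [HC Hdis Hoff Hcol ->]]]]].
  by rewrite (pihomogM _ _ (bin_homog _ _ _)) /= /gamma raddf0; apply: I0.
rewrite (pihomogM _ _ (fCA_homog _ _ _)) /= gammaM; apply: IM.
exact: (gamma_lin hm).
Qed.
End Part1.



Section Part2.
Variables (K : fieldType) (m n k : nat) (rows : 'I_k -> 'I_n -> K).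
Local Notation N := #|{set 'I_n}|.

Definition lst (mo : 'X_{1..N}) : seq {set 'I_n} :=
  flatten [seq nseq (mo i) (enum_val i) | i <- enum 'I_N].

Definition Sm (mo : 'X_{1..N}) : {set 'I_m * 'I_n} :=
  [set x : 'I_m * 'I_n | x.2 \in nth set0 (lst mo) x.1].

Lemma prod_nseq (T : Type) (F : T -> zring K 'I_n) a j :
  \prod_(X <- nseq j a) F X = F a ^+ j.
Proof. by elim: j => [|j IH]; rewrite ?big_nil ?expr0 // big_cons IH exprS. Qed.

Lemma zp_lst mo : \prod_(X <- lst mo) zvar K X = 'X_[mo].
Proof.
rewrite /lst big_flatten big_map big_enum /= mpolyXE_id.
by apply: eq_bigr => i _; rewrite prod_nseq /zvar enum_valK.
Qed.

Lemma size_lst mo : size (lst mo) = mdeg mo.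
Proof.
rewrite /lst size_flatten /shape -map_comp sumnE big_map big_enum mdegE /=.
by apply: eq_bigr => i _; rewrite /= size_nseq.
Qed.

Lemma gamma_Sm mo : mdeg mo = m -> gamma (zvar K (Sm mo)) = 'X_[mo].
Proof.
move=> Hd; rewrite gamma_zvar -zp_lst (big_nth set0) size_lst Hd big_mkord.
by apply: eq_bigr => i _; congr zvar; apply/setP => j; rewrite !inE.
Qed.

Lemma part2 (q : zring K 'I_n) : q \is m.-homog ->
  exists p : zring K ('I_m * 'I_n)%type, p \is 1.-homog /\ I_SE rows (gamma p - q).
Proof.
move=> Hq; exists (\sum_(mo <- msupp q) q@_mo *: zvar K (Sm mo)); split.
  by apply: rpred_sum => mo _; apply: rpredZ; apply: zvar_homog.
rewrite gamma_sum.
rewrite (eq_big_seq (fun mo => q@_mo *: 'X_[mo])); last first.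
  by move=> mo Hmo; rewrite gammaZ gamma_Sm ?mul_mpolyC //; apply: (dhomog_mf Hq).
by rewrite -mpolyE subrr; apply: I0.
Qed.
End Part2.


(* L ⊆ C^n is the row space of rows : 'I_k -> 'I_n -> C, with C = R[i]. *)
Theorem lemma5p17 (R : realType) (n k m : nat) (rows : 'I_k -> 'I_n -> R[i])
  (hm : (1 <= m)%N) :
  (* gamma is well defined on (R_{L(m)})_1 = Poly_1 / (I^SE_{L(m)} ∩ Poly_1) *)
  (forall p : zring R[i] ('I_m * 'I_n)%type,
      p \is 1.-homog ->
      I_SE (@thicken R[i] m n k rows) p ->
      I_SE rows (gamma p))
  /\
  (* gamma is surjective onto (R_L)_m *)
  (forall q : zring R[i] 'I_n,
      q \is m.-homog ->
      exists p : zring R[i] ('I_m * 'I_n)%type,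
        p \is 1.-homog /\ I_SE rows (gamma p - q)).
Proof.
split.
  by move=> p Hp HI; apply: (part1 hm).
by move=> q Hq; apply: part2.
Qed.
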